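(* Let $A$ and $B$ be commutative associative unital algebras over $\mathbb{C}$ or $\mathbb{R}$, and assume $B$ is connected in the sense that for every $k\ge0$ and $b\in B$, $b(b-1)(b-2)\cdots(b-k)=0$ implies $b=j$ for some $j\in\{0,1,\dots,k\}$. Let $\mathbf{f}\colon A\to B$ be a linear map such that there is $N\in\mathbb{N}$ with the property that for every $a\in A$ the characteristic function $R(\mathbf{f},a,z)$ is a polynomial in $z$ of degree at most $N$. Then $\mathbf{f}(1)=n$ for some integer $n$ with $0\le n\le N$, $R(\mathbf{f},1,z)=(1+z)^n$, and for every $a\in A$, $R(\mathbf{f},a,z)$ is a polynomial in $z$ of degree at most $n$.
   Context: For a linear map $\mathbf{f}\colon A\to B$, its characteristic function is the formal power series $R(\mathbf{f},a,z)=\exp\bigl(\mathbf{f}(\ln(1+az))\bigr)\in B[[z]]$, where $\ln(1+az)=\sum_{k\ge1}(-1)^{k-1}a^kz^k/k$ and $\mathbf{f}$ is applied coefficientwise. *)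

(* Defs.v *)
From HB Require Import structures.
From mathcomp Require Import all_boot all_order all_algebra.
From mathcomp Require Import complex.
From mathcomp Require Import reals.
Set Implicit Arguments. Unset Strict Implicit. Unset Printing Implicit Defensive.
Import Order.TTheory GRing.Theory Num.Theory.
Local Open Scope ring_scope.

(* Coefficients of ln(1 + a z) = sum_{k>=1} (-1)^(k-1) a^k z^k / k. *)
Definition log1p_coef (K : fieldType) (A : comAlgType K) (a : A) (k : nat) : A :=
  if k is 0 then 0 else (((-1) ^+ k.-1 / k%:R : K) *: a ^+ k).

(* n-th coefficient of the formal power series
   R(f,a,z) = exp (f (ln (1 + a z))) in B[[z]].  Since the series
   g(z) = f(ln(1+az)) has zero constant term, the z^n coefficient of
   exp g = sum_m g^m / m! only involves m <= n and the coefficients g_0..g_n,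
   so it is computed exactly from the truncation G of g at degree n. *)
Definition charfun (K : fieldType) (A B : comAlgType K) (f : A -> B) (a : A)
    (n : nat) : B :=
  let G : {poly B} := \poly_(i < n.+1) f (log1p_coef a i) in
  \sum_(m < n.+1) ((m`!%:R : K)^-1 *: (G ^+ m)`_n).

Definition connected_alg (K : fieldType) (B : comAlgType K) : Prop :=
  forall (k : nat) (b : B), \prod_(j < k.+1) (b - j%:R) = 0 ->
    exists j : 'I_k.+1, b = (j : nat)%:R.

Definition charfun_statement (K : fieldType) : Prop :=
  forall (A B : comAlgType K) (f : {linear A -> B}) (N : nat),
    connected_alg B ->
    (forall (a : A) (k : nat), (N < k)%N -> charfun f a k = 0) ->
    exists n : nat, [/\ (n <= N)%N, f 1 = n%:R,
      (forall k : nat, charfun f 1 k = 'C(n, k)%:R) &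
      (forall (a : A) (k : nat), (n < k)%N -> charfun f a k = 0)].

(* Main.v *)
Require Import Defs.
From HB Require Import structures.
From mathcomp Require Import all_boot all_order all_algebra.
From mathcomp Require Import complex.
From mathcomp Require Import reals.
From mathcomp Require Import ring zify.
Set Implicit Arguments. Unset Strict Implicit. Unset Printing Implicit Defensive.
Import Order.TTheory GRing.Theory Num.Theory.
Local Open Scope ring_scope.

Section Eqm.
Variable T : comNzRingType.
Implicit Types p q r : {poly T}.

Definition eqm (L : nat) p q := forall i, (i < L)%N -> p`_i = q`_i.

Lemma eqm_refl L p : eqm L p p. Proof. by []. Qed.
Lemma eqm_sym L p q : eqm L p q -> eqm L q p. Proof. by move=> h i /h. Qed.
Lemma eqm_trans L p q r : eqm L p q -> eqm L q r -> eqm L p r.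
Proof. by move=> h1 h2 i hi; rewrite h1 // h2. Qed.
Lemma eqmD L p q p' q' : eqm L p p' -> eqm L q q' -> eqm L (p + q) (p' + q').
Proof. by move=> h1 h2 i hi; rewrite !coefD h1 // h2. Qed.
Lemma eqmN L p q : eqm L p q -> eqm L (- p) (- q).
Proof. by move=> h i hi; rewrite !coefN h. Qed.
Lemma eqmB L p q p' q' : eqm L p p' -> eqm L q q' -> eqm L (p - q) (p' - q').
Proof. by move=> h1 h2; apply: eqmD => //; apply: eqmN. Qed.
Lemma eqmM L p q p' q' : eqm L p p' -> eqm L q q' -> eqm L (p * q) (p' * q').
Proof.
move=> h1 h2 i hi; rewrite !coefM; apply: eq_bigr => j _.
have hj : (j < L)%N by apply: leq_ltn_trans hi; rewrite -ltnS.
by rewrite h1 // h2 // (leq_ltn_trans (leq_subr _ _) hi).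
Qed.
Lemma eqmX L p q n : eqm L p q -> eqm L (p ^+ n) (q ^+ n).
Proof. by move=> h; elim: n => [|n IH]; rewrite ?expr0 // !exprS; apply: eqmM. Qed.
Lemma eqm_le L L' p q : (L' <= L)%N -> eqm L p q -> eqm L' p q.
Proof. by move=> hL h i hi; apply: h; apply: leq_trans hL. Qed.
Lemma eqm0P L p q : eqm L (p - q) 0 <-> eqm L p q.
Proof.
split=> h i hi; have := h i hi; rewrite !coefB ?coef0.
  by move/eqP; rewrite subr_eq0 => /eqP.
by move->; rewrite subrr.
Qed.
Lemma eqm_ideal L e c : eqm L e 0 -> eqm L (e * c) 0.
Proof. by move=> h; rewrite -(mul0r c); apply: eqmM. Qed.
Lemma eqmXM L p q : eqm L p q -> eqm L.+1 ('X * p) ('X * q).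
Proof. by move=> h [|i] hi; rewrite !coefXM //= h. Qed.
Lemma eqm_deriv L p q : eqm L.+1 p q -> eqm L p^`() q^`().
Proof. by move=> h i hi; rewrite !coef_deriv h. Qed.
Lemma eqm_cancel L D U x y : eqm L (D * U) 1 -> eqm L (U * x) (U * y) -> eqm L x y.
Proof.
move=> hD h.
apply: (@eqm_trans _ _ (D * U * x)); first by rewrite -{1}(mul1r x); apply: eqmM => //; apply: eqm_sym.
apply: (@eqm_trans _ _ (D * U * y)); last by rewrite -{2}(mul1r y); apply: eqmM.
by rewrite -!mulrA; apply: eqmM.
Qed.
Lemma eqm_exact L p q : (size p <= L)%N -> (size q <= L)%N -> eqm L p q -> p = q.
Proof.
move=> /leq_sizeP hp /leq_sizeP hq h; apply/polyP=> i.
case: (ltnP i L) => hi; first exact: h.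
by rewrite hp // hq.
Qed.
Lemma coefX_pow_small (V : {poly T}) j i : (i < j)%N -> (('X * V) ^+ j)`_i = 0.
Proof. by move=> h; rewrite exprMn coefXnM h. Qed.
Lemma eqm_comp L (V : {poly T}) p q : eqm L p q -> eqm L (p \Po ('X * V)) (q \Po ('X * V)).
Proof.
move=> /eqm0P h; apply/eqm0P; rewrite -comp_polyB.
move: h; set r := p - q => h i hi; rewrite coef_comp_poly coef0.
apply: big1 => j _; case: (ltnP j L) => hj; first by rewrite h // coef0 mul0r.
by rewrite coefX_pow_small ?mulr0 // (leq_trans hi).
Qed.
Lemma eqm_sum L (I : finType) (F G : I -> {poly T}) :
  (forall j, eqm L (F j) (G j)) -> eqm L (\sum_j F j) (\sum_j G j).
Proof. by move=> h i hi; rewrite !coef_sum; apply: eq_bigr => j _; apply: h. Qed.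

Lemma inv_lin L (b : T) : eqm L (\poly_(i < L) (- b) ^+ i * (1 + b%:P * 'X)) 1.
Proof.
move=> i hi; rewrite mulrDr mulr1 coefD mulrA coefMX coefMC !coef_poly hi coef1.
case: i hi => [|i] hi /=; first by rewrite expr0 addr0.
by rewrite (ltnW hi) exprS mulNr mulrC addNr.
Qed.

Definition VT L : {poly T} := \poly_(i < L) (-1) ^+ i.
Definition WT L : {poly T} := 'X * VT L.
Notation P1 := ('X + 1 : {poly T}).

Lemma VT_inv L : eqm L (VT L * P1) 1.
Proof.
have := @inv_lin L 1; rewrite polyC1 mul1r addrC /VT.
by [].
Qed.

Lemma WT_X L : eqm L.+1 (P1 * WT L) 'X.
Proof.
rewrite /WT mulrCA -[X in eqm _ _ X]mulr1; apply: eqmXM.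
by rewrite mulrC; apply: VT_inv.
Qed.

Lemma WT_deriv L : eqm L (WT L)^`() (VT L ^+ 2).
Proof.
have h1 : eqm L (WT L + P1 * (WT L)^`()) 1.
  have := eqm_deriv (@WT_X L); rewrite derivM derivD derivX derivC addr0 mul1r. by [].
apply: (eqm_cancel (D:=VT L ^+ 2) (U:=P1 ^+ 2)).
  by rewrite -exprMn; apply: (eqm_trans (q:=1 ^+ 2)); [apply: eqmX; apply: VT_inv | rewrite expr1n].
apply: (eqm_trans (q:=1)); last first.
  rewrite -exprMn mulrC; apply: eqm_sym; apply: (eqm_trans (q:=1 ^+ 2)); [apply: eqmX; exact: VT_inv | by rewrite expr1n].
apply/eqm0P.
have -> : P1 ^+ 2 * (WT L)^`() - 1 =
   (WT L + P1 * (WT L)^`() - 1) * P1 - (P1 * WT L - 'X) by ring.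
rewrite -[X in eqm _ _ X](subr0 0); apply: eqmB; last by apply/eqm0P; apply: eqm_le (@WT_X L).
by rewrite -(mul0r P1); apply: eqmM => //; apply/eqm0P.
Qed.

Lemma size_P1X k : (size (P1 ^+ k) <= k.+1)%N.
Proof.
elim: k => [|k IH]; first by rewrite expr0 size_poly1.
rewrite exprS; apply: leq_trans (size_polyMleq _ _) _.
by rewrite -polyC1 size_XaddC /=.
Qed.

Lemma C1_id (a V Hc : {poly T}) :
  (1 + (1 + a) * 'X) * (V + Hc * V ^+ 2) - (1 + a) =
  (V * P1 - 1) * (a + 1 + a * 'X * V + a * V - a * 'X * (V + Hc * V ^+ 2)) +
  (Hc * (1 + a * ('X * V)) - a) * ((V * P1 - 1 + 1) * V).
Proof. ring. Qed.

Lemma T_id (bP Pn P Ec E'c Hc V Wd H' : {poly T}) :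
  bP * Pn * Ec + P * (Pn * (E'c * Wd)) - P * (H' * (Pn * Ec)) =
  (- (bP * Pn * Ec)) * (V * P - 1) + (P * Pn * Wd) * (E'c - Hc * Ec)
  + (P * Pn * Hc * Ec) * (Wd - V ^+ 2) + (- (P * Pn * Ec)) * (H' - (bP * V + Hc * V ^+ 2)).
Proof. ring. Qed.

Lemma eqm_comb L (c1 c2 c3 c4 e1 e2 e3 e4 : {poly T}) :
  eqm L e1 0 -> eqm L e2 0 -> eqm L e3 0 -> eqm L e4 0 ->
  eqm L (c1 * e1 + c2 * e2 + c3 * e3 + c4 * e4) 0.
Proof.
move=> h1 h2 h3 h4; rewrite -(addr0 0) -[X in eqm _ _ (X + _)](addr0 0) -[X in eqm _ _ (X + _ + _)](addr0 0).
by rewrite !(mulrC c1) !(mulrC c2) !(mulrC c3) !(mulrC c4); repeat apply: eqmD; apply: eqm_ideal.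
Qed.

Lemma perm4 (P c V C : {poly T}) : P * (c * V * C) = (V * P) * (c * C).
Proof. ring. Qed.
End Eqm.

Lemma coef_comp_widen (T : comNzRingType) (p q : {poly T}) m n :
  (size p <= m)%N -> (p \Po q)`_n = \sum_(i < m) p`_i * (q ^+ i)`_n.
Proof.
move=> hm; rewrite coef_comp_poly (big_ord_widen m (fun i => p`_i * (q ^+ i)`_n) hm).
rewrite big_mkcond /=; apply: eq_bigr => i _; case: ifP => // /negbT.
by rewrite -leqNgt => /leq_sizeP ->; rewrite // mul0r.
Qed.

Section Main.
Variable F : fieldType.
Hypothesis Fchar : forall k : nat, (k.+1)%:R != 0 :> F.
Variables A B : comAlgType F.
Variable f : {linear A -> B}.

Notation ia := (map_poly (in_alg A)).
Notation ib := (map_poly (in_alg B)).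

Lemma size_map_f (p : {poly A}) : (size (map_poly f p) <= size p)%N.
Proof. by apply/leq_sizeP => j hj; rewrite coef_map (leq_sizeP _ _ (leqnn _)) //= raddf0. Qed.

Lemma mapM_alg (p : {poly A}) (q : {poly F}) :
  map_poly f (p * ia q) = map_poly f p * ib q.
Proof.
apply/polyP => i; rewrite coef_map !coefM raddf_sum; apply: eq_bigr => j _.
by rewrite !coef_map /= !mulr_algr linearZ.
Qed.

Lemma mapComp_alg (p : {poly A}) (q : {poly F}) :
  map_poly f (p \Po ia q) = map_poly f p \Po ib q.
Proof.
apply/polyP => i; rewrite coef_map (coef_comp_widen _ _ (leqnn (size p))).
rewrite (coef_comp_widen _ _ (size_map_f p)) raddf_sum; apply: eq_bigr => j _.
by rewrite -!rmorphXn !coef_map /= !mulr_algr linearZ.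
Qed.

Lemma natmul_inj (x : B) k : x *+ k.+1 = 0 -> x = 0.
Proof.
move=> h; have : ((k.+1)%:R^-1 : F) *: (x *+ k.+1) = 0 by rewrite h scaler0.
by rewrite -scaler_nat scalerA mulVf // scale1r.
Qed.

Lemma ode_uniq L (H P Q : {poly B}) :
  eqm L P^`() (H * P) -> eqm L Q^`() (H * Q) -> P`_0 = Q`_0 -> eqm L.+1 P Q.
Proof.
move=> hP hQ h0.
suff: forall i, (i <= L)%N -> forall j, (j <= i)%N -> P`_j = Q`_j.
  by move=> h i hi; apply: (h i hi).
elim=> [|i IH] hi j hj; first by rewrite leqn0 in hj; rewrite (eqP hj).
rewrite leq_eqVlt in hj; case/orP: hj => [/eqP -> | hj]; last by apply: IH => //; apply: ltnW.
have e1 := hP i hi; have e2 := hQ i hi.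
rewrite !coef_deriv in e1 e2.
have : (H * P)`_i = (H * Q)`_i.
  rewrite !coefM; apply: eq_bigr => l _; rewrite IH ?leq_subr //; exact: ltnW.
rewrite -e1 -e2 => /eqP; rewrite -subr_eq0 -mulrnBl => /eqP /natmul_inj /eqP.
by rewrite subr_eq0 => /eqP.
Qed.

Definition gco (a : A) (i : nat) : B := f (log1p_coef a i).
Definition Gp L (a : A) : {poly B} := \poly_(i < L.+1) gco a i.
Definition Exs L (a : A) : {poly B} :=
  \sum_(m < L.+1) ((m`!%:R : F)^-1)%:A *: Gp L a ^+ m.
Definition Ep L (a : A) : {poly B} := \poly_(i < L.+1) charfun f a i.
Definition Ha L (b : A) : {poly A} := b%:P * \poly_(i < L) (- b) ^+ i.
Definition Hb L (b : A) : {poly B} := map_poly f (Ha L b).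

Lemma gco0 a : gco a 0 = 0.
Proof. by rewrite /gco /log1p_coef raddf0. Qed.

Lemma Gp_X L a : Gp L a = 'X * \poly_(i < L) gco a i.+1.
Proof.
apply/polyP => i; rewrite coefXM !coef_poly; case: i => [|i] //=.
by rewrite gco0.
Qed.

Lemma charfun_Exs L a k : (k <= L)%N -> charfun f a k = (Exs L a)`_k.
Proof.
move=> hk; rewrite /charfun /Exs coef_sum.
have hw : (k.+1 <= L.+1)%N by [].
rewrite (@big_ord_widen _ _ _ k.+1 L.+1 (fun m : nat => (m`!%:R : F)^-1 *: ((\poly_(i < k.+1) f (log1p_coef a i)) ^+ m)`_k) hw).
rewrite big_mkcond /=; apply: eq_bigr => m _.
rewrite coefZ mulr_algl; case: ifP => hm.
  congr (_ *: _); apply: (@eqmX _ k.+1) => //.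
  move=> i hi; rewrite !coef_poly hi.
  by rewrite (leq_trans hi hw).
by rewrite Gp_X coefX_pow_small ?scaler0 // ltnNge -ltnS hm.
Qed.

Lemma Ep_Exs L a : eqm L.+1 (Ep L a) (Exs L a).
Proof. by move=> i hi; rewrite coef_poly hi (@charfun_Exs L a i hi). Qed.

Lemma fact_inv_step i :
  (((i.+1)`!%:R : F)^-1)%:A *+ i.+1 = ((i`!%:R : F)^-1)%:A :> B.
Proof.
rewrite -scaler_nat scalerA; congr (_ *: _).
by rewrite factS natrM invfM mulrA mulfV ?mul1r.
Qed.

Lemma Exs_deriv L a : (Exs L a)^`() =
  (Gp L a)^`() * (Exs L a - (((L`!%:R : F)^-1)%:A *: Gp L a ^+ L)).
Proof.
rewrite {2}/Exs big_ord_recr /= addrK /Exs big_ord_recl /= expr0.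
rewrite derivD derivZ derivC scaler0 add0r !raddf_sum mulr_sumr /=.
apply: eq_bigr => i _.
rewrite derivZ deriv_exp /= /bump /= add0n add1n -mulrnAr -scalerAr mulrnAr -scalerMnr scalerMnl.
by rewrite fact_inv_step.
Qed.

Lemma sign_alg (S : comAlgType F) (x : S) i : (-1) ^+ i * x = ((-1) ^+ i : F) *: x.
Proof. by rewrite -mulr_algl -in_algE (rmorph_sign (in_alg S)). Qed.

Lemma Gp_deriv_H L a : eqm L (Gp L a)^`() (Hb L a).
Proof.
move=> i hi; rewrite coef_deriv coef_poly ltnS hi coef_map /= /Ha coefCM coef_poly hi.
rewrite /gco /log1p_coef /= linearZ /= -scaler_nat scalerA.
by rewrite [(- a) ^+ _]exprNn mulrCA mulfV // mulr1 mulrCA -exprS sign_alg linearZ.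
Qed.

Lemma charfun_ode L a : eqm L (Ep L a)^`() (Hb L a * Ep L a).
Proof.
apply: (@eqm_trans _ _ _ (Exs L a)^`()); first exact/eqm_deriv/Ep_Exs.
rewrite Exs_deriv; apply: eqmM; first exact: Gp_deriv_H.
apply: (@eqm_trans _ _ _ (Exs L a - 0)); last first.
  rewrite subr0; apply: eqm_sym; exact: (eqm_le (leqnSn L) (@Ep_Exs L a)).
apply: eqmB; first exact: eqm_refl.
move=> i hi; rewrite coefZ Gp_X coefX_pow_small ?mulr0 ?coef0 //.
Qed.

Notation P1 := ('X + 1).

Lemma charfun0 a : charfun f a 0 = 1.
Proof. by rewrite /charfun big_ord1 expr0 coef1 /= invr1 scale1r. Qed.

Lemma VT_map (S : comAlgType F) L : map_poly (in_alg S) (VT F L) = VT S L.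
Proof.
apply/polyP => i; rewrite coef_map !coef_poly; case: ifP => _ /=.
  by rewrite -in_algE rmorph_sign.
by rewrite scale0r.
Qed.

Lemma WT_map (S : comAlgType F) L : map_poly (in_alg S) (WT F L) = WT S L.
Proof. by rewrite /WT rmorphM /= map_polyX VT_map. Qed.

Lemma eqm_map L (p q : {poly A}) : eqm L p q -> eqm L (map_poly f p) (map_poly f q).
Proof. by move=> h i hi; rewrite !coef_map /= h. Qed.

Lemma mapf_VT L : map_poly f (VT A L) = (f 1)%:P * VT B L.
Proof.
apply/polyP => i; rewrite coef_map coefCM !coef_poly; case: ifP => _ /=.
  by rewrite -[(-1) ^+ i in LHS]mulr1 sign_alg linearZ /= mulrC sign_alg.
by rewrite mulr0 /=; exact: raddf0.
Qed.

Lemma Hb1 L : Hb L 1 = (f 1)%:P * VT B L.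
Proof. by rewrite /Hb /Ha mul1r -mapf_VT /VT. Qed.

Lemma C1 L a : eqm L (Ha L (1 + a)) (VT A L + (Ha L a \Po WT A L) * VT A L ^+ 2).
Proof.
set U := 1 + (1 + a)%:P * 'X.
set D := \poly_(i < L) (- (1 + a)) ^+ i.
apply: (eqm_cancel (D:=D) (U:=U)); first exact: inv_lin.
apply: (eqm_trans (q:=(1 + a)%:P)).
  rewrite /Ha -/D mulrCA -[X in eqm _ _ X]mulr1; apply: eqmM => //. rewrite mulrC. exact: inv_lin.
apply: eqm_sym; apply/eqm0P.
set V := VT A L; set Hc := Ha L a \Po WT A L.
set e1 := V * P1 - 1.
set e2 := Hc * (1 + a%:P * WT A L) - a%:P.
have he1 : eqm L e1 0 by apply/eqm0P; exact: VT_inv.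
have he2 : eqm L e2 0.
  apply/eqm0P.
  have := @inv_lin A L a; rewrite -/(Ha L a) => h.
  have h2 : eqm L (Ha L a * (1 + a%:P * 'X)) a%:P.
    rewrite /Ha -mulrA -[X in eqm _ _ X]mulr1; apply: eqmM => //.
  have := eqm_comp V h2.
  have e : forall q : {poly A}, (a%:P * 'X) \Po q = a%:P * q by move=> q; rewrite comp_polyM comp_polyC comp_polyX.
  by rewrite (comp_polyM (Ha L a)) comp_polyD -polyC1 comp_polyC e !comp_polyC polyC1.
have -> : U * (V + Hc * V ^+ 2) - (1 + a)%:P =
   e1 * (a%:P + 1 + a%:P * 'X * V + a%:P * V - a%:P * 'X * (V + Hc * V ^+ 2))
   + e2 * ((e1 + 1) * V).
  by rewrite /U /e1 /e2 /WT -/V polyCD polyC1 C1_id.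
rewrite -(addr0 0); apply: eqmD; exact: eqm_ideal.
Qed.

Lemma k4 L a : eqm L (Hb L (1 + a))
   ((f 1)%:P * VT B L + (Hb L a \Po WT B L) * VT B L ^+ 2).
Proof.
have := eqm_map (@C1 L a).
rewrite -(WT_map A) -(VT_map A) -rmorphXn raddfD /= mapM_alg mapComp_alg.
by rewrite (VT_map A) mapf_VT rmorphXn /= (VT_map B) (WT_map B).
Qed.

Lemma P1_deriv n : P1 * (P1 ^+ n)^`() = (n%:R)%:P * P1 ^+ n :> {poly B}.
Proof.
rewrite deriv_exp derivD derivX -polyC1 derivC addr0 mul1r polyC1.
case: n => [|m]; first by rewrite mulr0n mulr0 polyC0 mul0r.
by rewrite /= mulrnAr -exprS -mulr_natl rmorph_nat.
Qed.

Definition Tdef L a n : {poly B} := P1 ^+ n * (Ep L a \Po WT B L).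

Lemma T_ode L a n : f 1 = n%:R -> eqm L (Tdef L a n)^`() (Hb L (1 + a) * Tdef L a n).
Proof.
move=> hn.
apply: (eqm_cancel (D:=VT B L) (U:=P1)); first exact: VT_inv.
apply/eqm0P.
have -> : P1 * (Tdef L a n)^`() = (f 1)%:P * P1 ^+ n * (Ep L a \Po WT B L) +
   P1 * (P1 ^+ n * (((Ep L a)^`() \Po WT B L) * (WT B L)^`())).
  by rewrite /Tdef derivM deriv_comp mulrDr mulrA P1_deriv hn.
rewrite /Tdef (T_id _ _ _ _ _ (Hb L a \Po WT B L) (VT B L)); apply: eqm_comb.
- by apply/eqm0P; exact: VT_inv.
- apply/eqm0P; rewrite -comp_polyM; apply: eqm_comp; exact: charfun_ode.
- apply/eqm0P; exact: WT_deriv.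
- apply/eqm0P; exact: k4.
Qed.

Lemma Tdef0 L a n : (Tdef L a n)`_0 = 1.
Proof.
rewrite -horner_coef0 /Tdef /WT hornerM horner_exp horner_comp !hornerE.
by rewrite horner_coef0 coef_poly /= charfun0 expr1n mul1r.
Qed.

Lemma Ep_shift L a n : f 1 = n%:R -> eqm L.+1 (Ep L (1 + a)) (Tdef L a n).
Proof.
move=> hn; apply: (ode_uniq (H:=Hb L (1 + a))).
- exact: charfun_ode.
- exact: T_ode.
- by rewrite Tdef0 coef_poly /= charfun0.
Qed.

Lemma fact_neq0 k : (k`!%:R : F) != 0.
Proof. by have := fact_gt0 k; case: (k`!) => // m _; exact: Fchar. Qed.

Definition cc (b : B) k : B := ((k`!%:R : F)^-1) *: \prod_(j < k) (b - j%:R).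
Definition Cp L (b : B) : {poly B} := \poly_(k < L.+1) cc b k.

Lemma cc_step b k : cc b k.+1 *+ k.+1 = cc b k * (b - k%:R).
Proof.
rewrite /cc big_ord_recr /= scalerMnl -scalerAl; congr (_ *: _).
by rewrite -mulr_natl factS natrM invfM mulrA mulfV ?mul1r.
Qed.

Lemma Cp_ode L : eqm L (Cp L (f 1))^`() ((f 1)%:P * VT B L * Cp L (f 1)).
Proof.
apply: (eqm_cancel (D:=VT B L) (U:=P1)); first exact: VT_inv.
apply: (eqm_trans (q:=(f 1)%:P * Cp L (f 1))); last first.
  apply: eqm_sym; rewrite perm4 -[X in eqm _ _ X]mul1r; apply: eqmM => //.
  exact: VT_inv.
move=> i hi; rewrite mulrDl mul1r coefD coefXM coefCM !coef_deriv !coef_poly.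
have e : forall (c : B) m, c *+ m = c * m%:R by move=> c m; rewrite mulr_natr.
case: i hi => [|i] hi /=; rewrite !ltnS ?hi ?(ltnW hi) /=.
  by rewrite cc_step add0r subr0 mulrC.
rewrite cc_step cc_step -cc_step e -mulrDr.
by rewrite addrC subrK mulrC.
Qed.

Lemma charfun1 k : charfun f 1 k = cc (f 1) k.
Proof.
have h : eqm k.+1 (Ep k 1) (Cp k (f 1)).
  apply: (ode_uniq (H:=(f 1)%:P * VT B k)).
  - by rewrite -Hb1; exact: charfun_ode.
  - exact: Cp_ode.
  - by rewrite !coef_poly /= charfun0 /cc big_ord0 invr1 scale1r.
by have := h k (ltnSn k); rewrite !coef_poly ltnSn.
Qed.

Lemma prod_ffact n k : \prod_(j < k) (n%:R - j%:R : B) = (n ^_ k)%:R.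
Proof.
elim: k => [|k IH]; first by rewrite big_ord0 ffactn0.
rewrite big_ord_recr /= IH ffactnSr natrM.
case: (leqP k n) => hk; first by rewrite natrB.
by rewrite ffact_small // !mul0r.
Qed.

Lemma cc_nat n k : cc n%:R k = 'C(n, k)%:R.
Proof.
rewrite /cc prod_ffact -bin_ffact natrM mulr_natr -scaler_nat scalerA.
by rewrite mulVf ?fact_neq0 // scale1r.
Qed.

Lemma size_P1XB k : (size (P1 ^+ k : {poly B}) <= k.+1)%N.
Proof. exact: size_P1X. Qed.

Lemma deg_step M n : f 1 = n%:R -> (n < M)%N ->
  (forall b k, (M < k)%N -> charfun f b k = 0) -> forall a, charfun f a M = 0.
Proof.
move=> hn hnM hM a.
pose L := (M + M)%N.
have hML : (M <= L)%N by rewrite leq_addr.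
pose e j := charfun f a j.
have hE : Ep L a = \sum_(j < M.+1) e j *: 'X^j.
  rewrite -poly_def; apply/polyP => i; rewrite !coef_poly.
  case: (ltnP i M.+1) => hi; first by rewrite (leq_trans hi) // ltnS.
  by case: ifP => // _; rewrite hM.
pose W := WT B L.
pose Q := \sum_(j < M.+1) e j *: ('X^j * P1 ^+ (M - j)).
have h1 : eqm L.+1 (P1 ^+ M * (Ep L a \Po W)) Q.
  rewrite hE -[_ \Po _]/(comp_poly _ _) raddf_sum mulr_sumr /Q.
  apply: eqm_sum => j; rewrite /= comp_polyZ comp_Xn_poly -scalerAr.
  rewrite -!mul_polyC; apply: eqmM => //.
  have hj : (j <= M)%N by rewrite -ltnS.
  rewrite -{1}(subnK hj) exprD -mulrA -exprMn mulrC; apply: eqmM => //.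
  by apply: eqmX; exact: WT_X.
have h2 : eqm L.+1 (P1 ^+ M * Ep L (1 + a)) (P1 ^+ n * Q).
  apply: (eqm_trans (q:=P1 ^+ M * Tdef L a n)); first by apply: eqmM => //; exact: Ep_shift.
  by rewrite /Tdef mulrCA; apply: eqmM.
have h3 : eqm L.+1 (P1 ^+ (M - n) * Ep L (1 + a)) Q.
  apply: (eqm_cancel (D:=VT B L.+1 ^+ n) (U:=P1 ^+ n)).
    rewrite -exprMn; apply: (eqm_trans (q:=1 ^+ n)); [apply: eqmX; exact: VT_inv | by rewrite expr1n].
  by rewrite mulrA -exprD subnKC // ltnW.
have hsE : (size (Ep L (1 + a)) <= M.+1)%N.
  apply/leq_sizeP => j hj; rewrite coef_poly; case: ifP => // _; exact: hM.
have h4 : P1 ^+ (M - n) * Ep L (1 + a) = Q.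
  apply: (eqm_exact _ _ h3).
    apply: leq_trans (size_polyMleq _ _) _.
    have := leq_add (size_P1XB (M - n)) hsE; rewrite addSn /= => h.
    have := leq_add (size_P1XB (M - n)) hsE; rewrite /L.
    move: (size _) (size _) => x y; lia.
  apply/leq_sizeP => i hi; rewrite /Q coef_sum big1 // => j _.
  rewrite coefZ.
  have hs : (size (('X^j * P1 ^+ (M - j))%R : {poly B}) <= M.+1)%N.
    apply: leq_trans (size_polyMleq _ _) _; rewrite size_polyXn.
    have := size_P1XB (M - j); have := ltn_ord j; move: (size _) => x; lia.
  rewrite (leq_sizeP _ _ hs) ?mulr0 //; move: hi; rewrite /L; lia.
have := congr1 (fun p => p.[-1]) h4.
rewrite /= hornerM horner_exp !hornerE addNr expr0n subn_eq0 leqNgt hnM /= mul0r.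
rewrite /Q horner_sum big_ord_recr /= big1.
  rewrite add0r hornerZ hornerM horner_exp !hornerE addNr subnn => h.
  have h' : 0 = e M * (-1) ^+ M by rewrite [LHS]h; rewrite /= expr0 mulr1. 
  have := congr1 (fun x => x * (-1) ^+ M) h'.
  by rewrite mul0r -mulrA -expr2 -exprM mulnC exprM sqrrN expr1n expr1n mulr1.
move=> j _; rewrite hornerZ hornerM horner_exp !hornerE addNr expr0n.
by rewrite subn_eq0 leqNgt ltn_ord /= !mulr0.
Qed.
End Main.

Lemma main_gen (F : fieldType) (Fchar : forall k : nat, (k.+1)%:R != 0 :> F) :
  charfun_statement F.
Proof.
move=> A B f N hB hN.
have hc : cc (f 1) N.+1 = 0 by rewrite -(charfun1 Fchar); exact: hN.
have hp : \prod_(j < N.+1) (f 1 - j%:R) = 0.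
  have := congr1 (fun x => (((N.+1)`!%:R : F) *: x)) hc.
  by rewrite /cc /= scalerA mulfV ?(fact_neq0 Fchar) // scale1r scaler0.
case: (hB N (f 1) hp) => j hj.
have hjN : (j <= N)%N by rewrite -ltnS ltn_ord.
exists j; split => //.
  by move=> k; rewrite (charfun1 Fchar) hj (cc_nat Fchar).
have key : forall d, (d <= N - j)%N -> forall a k, (N - d < k)%N -> charfun f a k = 0.
  elim=> [|d IH] hd a k hk; first by rewrite subn0 in hk; exact: hN.
  case: (ltnP (N - d) k) => h; first by apply: IH => //; exact: ltnW.
  have -> : k = (N - d)%N by lia.
  apply: (deg_step Fchar (n:=j)) => //; first by lia.
  by move=> b k'; apply: IH => //; exact: ltnW.
move=> a k hk; apply: (key (N - j)%N (leqnn _)); by rewrite subKn.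
Qed.

Theorem mainTheorem2 :
  (forall R : realType, charfun_statement R) /\
  (forall R : realType, charfun_statement (complex R)).
Proof.
by split => R; apply: main_gen => k; rewrite pnatr_eq0.
Qed.
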